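(* Let $D=\mathrm{diag}(1,-1,1,-1,\ldots)=(1,-x)$, $\mathbb{F}^{\rm S}=(1,x(1+x))$, $\mathbb{L}^{\rm S}=(1+2x,x(1+x))$, let $\mathbf e=[1,1,1,\ldots]^T$, and let $C_n=\frac{1}{n+1}\binom{2n}{n}$ be the Catalan numbers. Then: (a) $D(\mathbb{F}^{\rm S})^{-1}D\,\mathbf e=[C_0,C_1,C_2,\ldots,C_n,\ldots]^T$; (b) $D(\mathbb{L}^{\rm S})^{-1}D\,\mathbf e=[C_0,3C_1,5C_2,\ldots,(2n+1)C_n,\ldots]^T$.
   Context: All matrices are infinite with rows and columns indexed by $0,1,2,\ldots$. For formal power series $g(x)=g_0+g_1x+\cdots$ with $g_0\ne0$ and $f(x)=f_1x+f_2x^2+\cdots$ with $f_1\ne0$, $(g(x),f(x))$ denotes the (Riordan) infinite lower triangular matrix whose $j$-th column has generating function $g(x)f(x)^j$. These matrices form a group under matrix multiplication with $(g,f)(h,l)=(g\cdot h(f),l(f))$. Since the matrices are lower triangular, each entry of the product with $\mathbf e$ is a finite row sum. *)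

(* Defs.v *)
From mathcomp Require Import all_boot all_order all_algebra.
Set Implicit Arguments. Unset Strict Implicit. Unset Printing Implicit Defensive.
Import GRing.Theory Num.Theory.
Local Open Scope ring_scope.

(* formal power series: coefficient sequences *)
Definition ps := nat -> rat.
Definition ps_one : ps := fun n => (n == 0%N)%:R.
Definition ps_mul (a b : ps) : ps :=
  fun n => \sum_(i < n.+1) a i * b (n - i)%N.
Definition ps_pow (a : ps) (j : nat) : ps := iter j (ps_mul a) ps_one.

Definition imx := nat -> nat -> rat.
Definition ivec := nat -> rat.

(* Riordan array (g, f): column j has generating function g * f^j *)
Definition riordan (g f : ps) : imx := fun n j => ps_mul g (ps_pow f j) n.

Definition lower_tri (A : imx) : Prop := forall i j, (i < j)%N -> A i j = 0.
Definition imx_one : imx := fun i j => (i == j)%:R.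
(* product of lower triangular matrices: finite sums *)
Definition imx_mul (A B : imx) : imx :=
  fun i j => \sum_(k < i.+1) A i k * B k j.
Definition imx_app (A : imx) (v : ivec) : ivec :=
  fun i => \sum_(k < i.+1) A i k * v k.

Definition is_inverse (M A : imx) : Prop :=
  lower_tri M /\ imx_mul M A = imx_one /\ imx_mul A M = imx_one.

(* D = (1, -x) *)
Definition Dmx : imx := riordan ps_one (fun n => if n == 1%N then -1 else 0).
(* F^S = (1, x(1+x)), L^S = (1+2x, x(1+x)) *)
Definition xx2 : ps := fun n => if (n == 1%N) || (n == 2%N) then 1 else 0.
Definition FS : imx := riordan ps_one xx2.
Definition LS : imx := riordan (fun n => if n == 0%N then 1 else if n == 1%N then 2 else 0) xx2.

Definition e_vec : ivec := fun _ => 1.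
Definition catalan (n : nat) : rat := ('C(n.*2, n))%:R / (n.+1)%:R.

(* Main.v *)
Require Import Defs.
From mathcomp Require Import all_boot all_order all_algebra.
From mathcomp Require Import zify ring lra.
From Stdlib Require Import FunctionalExtensionality.
Import GRing.Theory Num.Theory.
Local Open Scope ring_scope.

Lemma ps_mulS (a p : ps) n :
  ps_mul a p n.+1 = a 0%N * p n.+1 + ps_mul (fun i => a i.+1) p n.
Proof.
rewrite /ps_mul big_ord_recl /= subn0; done.
Qed.

Lemma ps_mul_const (a p : ps) n :
  (forall i, a i.+1 = 0) -> ps_mul a p n = a 0%N * p n.
Proof.
move=> H; rewrite /ps_mul big_ord_recl /= subn0 big1 ?addr0 //.
by move=> i _; rewrite /bump /= add1n H mul0r.
Qed.

Lemma ps_mul0 (a p : ps) : ps_mul a p 0 = a 0%N * p 0%N.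
Proof. by rewrite /ps_mul big_ord1. Qed.

Lemma ps_mul_one p n : ps_mul ps_one p n = p n.
Proof. by rewrite ps_mul_const ?mul1r. Qed.

Definition negx : ps := fun n => if n == 1%N then -1 else 0.

Lemma ps_mul_negx p n :
  ps_mul negx p n = if n is n'.+1 then - p n' else 0.
Proof.
case: n => [|n]; first by rewrite ps_mul0 /negx /= mul0r.
by rewrite ps_mulS ps_mul_const // /negx /= mul0r add0r mulN1r.
Qed.

Lemma ps_mul_xx2 p n :
  ps_mul xx2 p n = (if n is n'.+1 then p n' else 0)
                   + (if n is n'.+2 then p n' else 0).
Proof.
case: n => [|[|n]].
- by rewrite ps_mul0 /xx2 /= mul0r addr0.
- by rewrite ps_mulS ps_mul0 /xx2 /= mul0r add0r mul1r addr0.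
- by rewrite ps_mulS ps_mulS ps_mul_const // /xx2 /= mul0r add0r !mul1r.
Qed.

Definition g12 : ps := fun n => if n == 0%N then 1 else if n == 1%N then 2 else 0.

Lemma ps_mul_g12 p n :
  ps_mul g12 p n = p n + (if n is n'.+1 then 2 * p n' else 0).
Proof.
case: n => [|n].
- by rewrite ps_mul0 /g12 /= mul1r addr0.
- by rewrite ps_mulS ps_mul_const // /g12 /= mul1r.
Qed.

Definition fsb (k n : nat) : rat := if (k <= n)%N then ('C(k, n - k))%:R else 0.

Lemma P_coef k n : ps_pow xx2 k n = fsb k n.
Proof.
elim: k n => [|k IH] n.
  by rewrite /fsb /= /ps_one subn0 bin0n.
rewrite /ps_pow iterS -/(ps_pow xx2 k) ps_mul_xx2 /fsb.
case: n => [|[|n]]; rewrite ?IH /fsb.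
- by rewrite addr0.
- by case: k {IH} => [|k] //=; rewrite addr0.
- rewrite !ltnS.
  case: (ltngtP k n) => Hk.
  + rewrite (leqW (ltnW Hk)) subSS subSn ?(ltnW Hk) // binS natrD.
    done.
  + case: (eqVneq k n.+1) => [->|Hne].
    * by rewrite ltnSn !subnn !bin0 addr0.
    * have Hk2 : (k <= n.+1)%N = false.
        by apply/negbTE; rewrite -ltnNge ltn_neqAle eq_sym Hne.
      by rewrite Hk2 addr0.
  + subst k; rewrite leqnSn subSS subSn // subnn binS natrD.
    done.
Qed.

Lemma D_coef j n : ps_pow negx j n = if n == j then (-1) ^+ j else 0.
Proof.
elim: j n => [|j IH] n.
  by rewrite /= /ps_one; case: n.
rewrite /ps_pow iterS -/(ps_pow negx j) ps_mul_negx.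
case: n => [|n] //; rewrite IH eqSS.
by case: (n == j); rewrite ?exprS ?mulN1r ?oppr0.
Qed.
Lemma sum_shrink (F : nat -> rat) l i : (l <= i)%N ->
  (forall k, (l < k)%N -> (k <= i)%N -> F k = 0) ->
  \sum_(k < i.+1) F k = \sum_(k < l.+1) F k.
Proof.
move=> Hli HF; rewrite (big_ord_widen _ _ (_ : l.+1 <= i.+1)%N) // [RHS]big_mkcond /=.
apply: eq_bigr => k _; case: ifP => // /negbT; rewrite -leqNgt => Hk.
by rewrite HF // -ltnS.
Qed.

Lemma imx_mulA A B C : lower_tri B ->
  imx_mul (imx_mul A B) C = imx_mul A (imx_mul B C).
Proof.
move=> HB; apply: functional_extensionality => i.
apply: functional_extensionality => j.
rewrite /imx_mul.
transitivity (\sum_(l < i.+1) \sum_(k < i.+1) A i l * B l k * C k j).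
  rewrite exchange_big /=; apply: eq_bigr => k _.
  by rewrite mulr_suml.
apply: eq_bigr => l _; rewrite mulr_sumr.
rewrite (@sum_shrink (fun k => A i l * B l k * C k j) l i).
- by apply: eq_bigr => k _; rewrite mulrA.
- by rewrite -ltnS.
- by move=> k Hk _; rewrite HB // mulr0 mul0r.
Qed.

Lemma imx_appA M A w : lower_tri A ->
  imx_app (imx_mul M A) w = imx_app M (imx_app A w).
Proof.
move=> HA; apply: functional_extensionality => i.
rewrite /imx_app /imx_mul.
transitivity (\sum_(l < i.+1) \sum_(k < i.+1) M i l * A l k * w k).
  rewrite exchange_big /=; apply: eq_bigr => k _.
  by rewrite mulr_suml.
apply: eq_bigr => l _; rewrite mulr_sumr.
rewrite (@sum_shrink (fun k => M i l * A l k * w k) l i).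
- by apply: eq_bigr => k _; rewrite mulrA.
- by rewrite -ltnS.
- by move=> k Hk _; rewrite HA // mulr0 mul0r.
Qed.

Lemma sum_delta_last (F : nat -> rat) i :
  \sum_(k < i.+1) (i == k)%:R * F k = F i.
Proof.
rewrite big_ord_recr /= eqxx mul1r big1 ?add0r // => k _.
by rewrite eq_sym (ltn_eqF (ltn_ord k)) mul0r.
Qed.

Lemma imx_app_one w : imx_app imx_one w = w.
Proof.
apply: functional_extensionality => i; exact: sum_delta_last.
Qed.

Lemma imx_mul1l N : imx_mul imx_one N = N.
Proof.
apply: functional_extensionality => i; apply: functional_extensionality => j.
exact: (sum_delta_last (fun k => N k j)).
Qed.

Lemma imx_mul1r A : lower_tri A -> imx_mul A imx_one = A.
Proof.
move=> HA; apply: functional_extensionality => i; apply: functional_extensionality => j.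
rewrite /imx_mul /imx_one.
case: (leqP j i) => Hji.
  rewrite (bigD1 (Ordinal (_ : j < i.+1)%N)) ?ltnS //= eqxx mulr1 big1 ?addr0 //.
  move=> k /negbTE Hk; rewrite -val_eqE /= in Hk.
  by rewrite Hk mulr0.
rewrite HA // big1 // => k _.
case: eqP => [Hk|]; last by rewrite mulr0.
by move: (ltn_ord k); rewrite Hk ltnS leqNgt Hji.
Qed.

Fixpoint colv (A : imx) (j i : nat) : seq rat :=
  match i with
  | 0 => [:: (0 == j)%:R]
  | i'.+1 => let s := colv A j i' in
      rcons s ((i'.+1 == j)%:R - \sum_(k < i'.+1) A i'.+1 k * nth 0 s k)
  end.

Definition Minv (A : imx) : imx := fun i j => nth 0 (colv A j i) i.

Lemma size_colv A j i : size (colv A j i) = i.+1.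
Proof. by elim: i => [|i IH] //=; rewrite size_rcons IH. Qed.

Lemma colv_prefix A j i k : (k <= i)%N -> nth 0 (colv A j i) k = Minv A k j.
Proof.
elim: i => [|i IH]; first by rewrite leqn0 => /eqP ->.
rewrite leq_eqVlt => /orP [/eqP ->|Hk] //.
rewrite /= nth_rcons size_colv Hk; exact: IH.
Qed.

Lemma MinvE A i j :
  Minv A i j = (i == j)%:R - \sum_(k < i) A i k * Minv A k j.
Proof.
case: i => [|i]; first by rewrite big_ord0 subr0.
rewrite {1}/Minv /= nth_rcons size_colv ltnn eqxx.
congr (_ - _); apply: eq_bigr => k _; rewrite colv_prefix //.
by rewrite -ltnS.
Qed.

Definition unitri (A : imx) := lower_tri A /\ forall i, A i i = 1.

Lemma Minv_lower A : lower_tri (Minv A).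
Proof.
move=> i; elim/ltn_ind: i => i IH j Hij.
rewrite MinvE (ltn_eqF Hij) big1 ?subrr // => k _.
by rewrite IH ?mulr0 // (ltn_trans (ltn_ord k)).
Qed.

Lemma Minv_diag A i : Minv A i i = 1.
Proof.
rewrite MinvE eqxx big1 ?subr0 // => k _.
by rewrite Minv_lower ?mulr0.
Qed.

Lemma Minv_right A : unitri A -> imx_mul A (Minv A) = imx_one.
Proof.
move=> [HA Hd]; apply: functional_extensionality => i; apply: functional_extensionality => j.
rewrite /imx_mul big_ord_recr /= Hd mul1r [Minv A i j]MinvE.
by rewrite addrC subrK.
Qed.

Lemma unitri_inverse A : unitri A -> exists M, is_inverse M A.
Proof.
move=> HA; exists (Minv A).
have HM : unitri (Minv A) by split; [exact: Minv_lower | exact: Minv_diag].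
have H1 := @Minv_right A HA.
have H2 := @Minv_right _ HM.
have EN : Minv (Minv A) = A.
  rewrite -(imx_mul1l (Minv (Minv A))) -H1 imx_mulA ?H2 ?imx_mul1r //.
    by case: HA.
  exact: Minv_lower.
split; first exact: Minv_lower.
by split; rewrite // -{2}EN.
Qed.
Lemma natX k m : ((k+m).+1 * ('C(k, m.+1) + 2 * 'C(k,m)) =
   2*(2*k+1)*'C(k,m) + k * 'C(k.-1, m.+1))%N.
Proof.
have F1 := mul_bin_left k m.
have F2 := mul_bin_down k m.+1.
case: (ltnP m k) => Hmk.
  nia.
have Hb : 'C(k, m.+1) = 0%N by rewrite bin_small // ltnS.
rewrite Hb in F2 *.
case: (ltnP k m) => Hkm.
  have Ha : 'C(k, m) = 0%N by rewrite bin_small.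
  rewrite Ha; nia.
have Em : m = k by apply/eqP; rewrite eqn_leq Hmk Hkm.
subst m; rewrite binn.
nia.
Qed.

Lemma natA k m : ((k+m).+1 * (k+m).+2 * ('C(k, m.+1) + 'C(k,m)) =
   k.+1 * (2*(2*k+1)*'C(k,m) + k * 'C(k.-1, m.+1)))%N.
Proof.
have F1 := mul_bin_left k m.
have F2 := mul_bin_down k m.+1.
case: (ltnP m k) => Hmk.
  nia.
have Hb : 'C(k, m.+1) = 0%N by rewrite bin_small // ltnS.
rewrite Hb in F2 *.
case: (ltnP k m) => Hkm.
  have Ha : 'C(k, m) = 0%N by rewrite bin_small.
  rewrite Ha; nia.
have Em : m = k by apply/eqP; rewrite eqn_leq Hmk Hkm.
subst m; rewrite binn.
nia.
Qed.

Lemma natB k : (k.+1 * 'C(k.+1.*2, k.+1) = 2 * (2*k+1) * 'C(k.*2, k))%N.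
Proof.
have F1 := mul_bin_diag (k.+1.*2) k.
have F2 := mul_bin_down (k.*2.+1) k.
rewrite doubleS /= in F1 F2 *.
have E : (k.*2.+1 - k = k.+1)%N by rewrite -addnn -addSn addnK.
rewrite E in F2.
nia.
Qed.

Definition Bc (k : nat) : rat := ('C(k.*2, k))%:R.
Definition tX (n k : nat) : rat := (-1) ^+ k * fsb k n * Bc k.
Definition tA (n k : nat) : rat := tX n k / (k.+1)%:R.
Definition Hc (n k : nat) : rat :=
  (-1) ^+ k * (k%:R * ('C(k.-1, n.+1 - k))%:R) * Bc k.

Lemma algX (N K K1 a b c s s1 be be1 : rat) :
  N * (b + 2 * a) = 2 * (2 * K + 1) * a + K * c ->
  K1 * be1 = 2 * (2 * K + 1) * be -> s1 = - s ->
  N * (s * b * be + 2 * (s * a * be)) = s * (K * c) * be - s1 * (K1 * a) * be1.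
Proof.
move=> E1 E2 ->.
have -> : N * (s * b * be + 2 * (s * a * be)) = s * be * (N * (b + 2 * a)) by ring.
rewrite E1.
have -> : s * (K * c) * be - - s * (K1 * a) * be1 = s * (K * c) * be + s * a * (K1 * be1) by ring.
rewrite E2; ring.
Qed.

Lemma BcS k : (k.+1)%:R * Bc k.+1 = 2 * (2 * k%:R + 1) * Bc k.
Proof.
have := congr1 (fun x : nat => x%:R : rat) (natB k).
by rewrite /Bc !natrM natrD natrM /=.
Qed.

Lemma stepX n k : (k <= n)%N ->
  (n.+1)%:R * (tX n.+1 k + 2 * tX n k) = Hc n k - Hc n k.+1.
Proof.
move=> Hk.
rewrite /tX /Hc /fsb (leqW Hk) Hk subSS subSn //= .
have En : n = (k + (n - k))%N by rewrite subnKC.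
move: (n - k)%N En => m En; subst n.
apply: algX; last by rewrite exprS mulN1r.
  transitivity ((((k+m).+1 * ('C(k, m.+1) + 2 * 'C(k,m)))%N)%:R : rat).
    by ring.
  by rewrite natX; ring.
exact: BcS.
Qed.

Lemma algA (N N2 K K1 a b c s s1 be be1 : rat) : K1 != 0 ->
  N * N2 * (b + a) = K1 * (2 * (2 * K + 1) * a + K * c) ->
  K1 * be1 = 2 * (2 * K + 1) * be -> s1 = - s ->
  N * N2 * (s * b * be / K1 + s * a * be / K1) = s * (K * c) * be - s1 * (K1 * a) * be1.
Proof.
move=> NZ E1 E2 ->.
have -> : N * N2 * (s * b * be / K1 + s * a * be / K1) = s * be * (N * N2 * (b + a)) / K1.
  by field.
rewrite E1.
have -> : s * (K * c) * be - - s * (K1 * a) * be1 = s * (K * c) * be + s * a * (K1 * be1) by ring.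
by rewrite E2; field.
Qed.

Lemma stepA n k : (k <= n)%N ->
  (n.+1)%:R * (n.+2)%:R * (tA n.+1 k + tA n k) = Hc n k - Hc n k.+1.
Proof.
move=> Hk.
rewrite /tA /tX /Hc /fsb (leqW Hk) Hk subSS subSn //= .
have En : n = (k + (n - k))%N by rewrite subnKC.
move: (n - k)%N En => m En; subst n.
apply: algA; last by rewrite exprS mulN1r.
- by rewrite pnatr_eq0.
- transitivity ((((k+m).+1 * (k+m).+2 * ('C(k, m.+1) + 'C(k,m)))%N)%:R : rat).
    by ring.
  by rewrite natA; ring.
exact: BcS.
Qed.

Definition SX n := \sum_(k < n.+1) tX n k.
Definition SA n := \sum_(k < n.+1) tA n k.

Lemma tele (f : nat -> rat) n :
  \sum_(k < n.+1) (f k - f k.+1) = f 0%N - f n.+1.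
Proof.
transitivity (- \sum_(k < n.+1) (f k.+1 - f k)).
  by rewrite -sumrN; apply: eq_bigr => k _; rewrite opprB.
by rewrite -(big_mkord xpredT (fun k => f k.+1 - f k)) telescope_sumr // opprB.
Qed.

Lemma Hc0 n : Hc n 0 = 0.
Proof. by rewrite /Hc !(mul0r, mulr0). Qed.

Lemma HcS n : Hc n n.+1 = (-1) ^+ n.+1 * (n.+1)%:R * Bc n.+1.
Proof. by rewrite /Hc /= subnn bin0 mulr1. Qed.

Lemma tXnn n : tX n n = (-1) ^+ n * Bc n.
Proof. by rewrite /tX /fsb leqnn subnn bin0 mulr1. Qed.

Lemma SX_rec n : SX n.+1 = -2 * SX n.
Proof.
have T : \sum_(k < n.+1) (n.+1)%:R * (tX n.+1 k + 2 * tX n k) = Hc n 0 - Hc n n.+1.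
  rewrite -tele; apply: eq_bigr => k _; apply: stepX; by rewrite -ltnS.
rewrite -mulr_sumr big_split /= -mulr_sumr Hc0 HcS in T.
rewrite /SX big_ord_recr /= tXnn.
have NZ : (n.+1)%:R != 0 :> rat by rewrite pnatr_eq0.
set P := \sum_(i < n.+1) tX n.+1 i.
have E : P + 2 * SX n = - ((-1) ^+ n.+1 * Bc n.+1).
  apply: (mulfI NZ); rewrite /SX T; ring.
have -> : P = - ((-1) ^+ n.+1 * Bc n.+1) - 2 * SX n by rewrite -E; ring.
rewrite -/(SX n); ring.
Qed.

Lemma SX_val n : SX n = (-2) ^+ n.
Proof.
elim: n => [|n IH].
  by rewrite /SX big_ord1 tXnn /Bc /= mul1r.
by rewrite SX_rec IH exprS.
Qed.

Lemma SA_rec n : SA n.+1 = - SA n.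
Proof.
have T : \sum_(k < n.+1) (n.+1)%:R * (n.+2)%:R * (tA n.+1 k + tA n k) = Hc n 0 - Hc n n.+1.
  rewrite -tele; apply: eq_bigr => k _; apply: stepA; by rewrite -ltnS.
rewrite -mulr_sumr big_split /= Hc0 HcS in T.
rewrite {1}/SA big_ord_recr /=.
have NZ : (n.+1)%:R * (n.+2)%:R != 0 :> rat by rewrite mulf_neq0 // pnatr_eq0.
have NZ2 : (n.+2)%:R != 0 :> rat by rewrite pnatr_eq0.
have Ett : tA n.+1 n.+1 = (-1) ^+ n.+1 * Bc n.+1 / (n.+2)%:R by rewrite /tA tXnn.
rewrite Ett.
set P := \sum_(i < n.+1) tA n.+1 i.
have E : P + SA n = - ((-1) ^+ n.+1 * Bc n.+1 / (n.+2)%:R).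
  apply: (mulfI NZ); rewrite /SA T.
  field. rewrite (_ : 2 + n%:R = (n.+2)%:R :> rat) //. by ring.
have -> : P = - ((-1) ^+ n.+1 * Bc n.+1 / (n.+2)%:R) - SA n by rewrite -E; ring.
ring.
Qed.

Lemma SA_val n : SA n = (-1) ^+ n.
Proof.
elim: n => [|n IH].
  by rewrite /SA big_ord1 /tA tXnn /Bc /= bin0; field.
by rewrite SA_rec IH exprS mulN1r.
Qed.


Lemma FS_coef i j : FS i j = fsb j i.
Proof. by rewrite /FS /riordan ps_mul_one P_coef. Qed.

Lemma LS_coef i j : LS i j = fsb j i + (if i is i'.+1 then 2 * fsb j i' else 0).
Proof.
rewrite /LS /riordan -/g12 ps_mul_g12 !P_coef.
by case: i => [|i]; rewrite ?P_coef.
Qed.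

Lemma Dmx_coef i j : Dmx i j = (i == j)%:R * (-1) ^+ j.
Proof.
rewrite /Dmx /riordan ps_mul_one -/negx D_coef.
by case: eqP; rewrite ?mul1r ?mul0r.
Qed.

Lemma fsb_lt j i : (i < j)%N -> fsb j i = 0.
Proof. by move=> H; rewrite /fsb leqNgt H. Qed.

Lemma fsb_diag i : fsb i i = 1.
Proof. by rewrite /fsb leqnn subnn bin0. Qed.

Lemma FS_unitri : unitri FS.
Proof.
split; first by move=> i j H; rewrite FS_coef fsb_lt.
by move=> i; rewrite FS_coef fsb_diag.
Qed.

Lemma LS_unitri : unitri LS.
Proof.
split.
  move=> i j H; rewrite LS_coef fsb_lt //; case: i H => [|i] H.
    by rewrite addr0.
  by rewrite fsb_lt ?mulr0 ?addr0 // (ltn_trans _ H).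
move=> i; rewrite LS_coef fsb_diag; case: i => [|i]; first by rewrite addr0.
by rewrite fsb_lt ?mulr0 ?addr0.
Qed.

Lemma sum_delta (F : nat -> rat) i j : (j <= i)%N ->
  \sum_(k < i.+1) F k * ((k : nat) == j)%:R = F j.
Proof.
move=> Hji.
rewrite (bigD1 (Ordinal (_ : j < i.+1)%N)) ?ltnS //= eqxx mulr1 big1 ?addr0 //.
move=> k /negbTE Hk; rewrite -val_eqE /= in Hk.
by rewrite Hk mulr0.
Qed.

Lemma DmxL X : imx_mul Dmx X = fun i j => (-1) ^+ i * X i j.
Proof.
apply: functional_extensionality => i; apply: functional_extensionality => j.
rewrite /imx_mul.
rewrite (eq_bigr (fun l : 'I_i.+1 => (i == l)%:R * ((-1) ^+ l * X l j))); last first.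
  by move=> l _; rewrite Dmx_coef mulrA.
exact: (sum_delta_last (fun l => (-1) ^+ l * X l j)).
Qed.

Lemma DmxR X i j : (j <= i)%N -> imx_mul X Dmx i j = X i j * (-1) ^+ j.
Proof.
move=> H; rewrite /imx_mul.
rewrite (eq_bigr (fun k : 'I_i.+1 => (X i k * (-1) ^+ j) * ((k : nat) == j)%:R)); last first.
  by move=> k _; rewrite Dmx_coef mulrA mulrAC.
exact: (@sum_delta (fun k => X i k * (-1) ^+ j) i j H).
Qed.

Lemma main_gen A M (w v : nat -> rat) : lower_tri A -> imx_mul M A = imx_one ->
  (forall n, imx_app A w n = (-1) ^+ n) -> (forall k, w k = (-1) ^+ k * v k) ->
  forall n, imx_app (imx_mul (imx_mul Dmx M) Dmx) e_vec n = v n.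
Proof.
move=> HA HM Hw Hv n.
have Hw2 : imx_app M (imx_app A w) = w by rewrite -imx_appA // HM imx_app_one.
have E : imx_app A w = fun n => (-1) ^+ n by apply: functional_extensionality.
rewrite E in Hw2.
have Hn := congr1 (fun f => f n) Hw2; rewrite /= Hv /imx_app in Hn.
rewrite /imx_app.
rewrite (eq_bigr (fun j : 'I_n.+1 => (-1) ^+ n * (M n j * (-1) ^+ j))); last first.
  move=> j _; rewrite DmxR; last by rewrite -ltnS.
  by rewrite DmxL /e_vec mulr1 mulrA.
rewrite -mulr_sumr Hn mulrA -exprMn mulrNN mulr1 expr1n mul1r //.
Qed.

Definition wA (k : nat) : rat := (-1) ^+ k * catalan k.
Definition wB (k : nat) : rat := (-1) ^+ k * ((k.*2.+1)%:R * catalan k).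

Lemma IA n : imx_app FS wA n = (-1) ^+ n.
Proof.
rewrite -SA_val /imx_app /SA; apply: eq_bigr => k _.
rewrite FS_coef /wA /tA /tX /catalan /Bc.
ring.
Qed.

Lemma termB n k : fsb k n * wB k = 2 * tX n k - tA n k.
Proof.
rewrite /wB /tA /tX /catalan /Bc.
have -> : (k.*2.+1)%:R = 2 * (k.+1)%:R - 1 :> rat.
  by rewrite -addn1 -muln2 natrD natrM -addn1 natrD; ring.
have NZ : (k.+1)%:R != 0 :> rat by rewrite pnatr_eq0.
set K := (k.+1)%:R.
field. by rewrite (_ : 1 + k%:R = (k.+1)%:R :> rat) //; ring.
Qed.

Lemma sumB n : \sum_(k < n.+1) fsb k n * wB k = 2 * SX n - SA n.
Proof.
rewrite (eq_bigr (fun k : 'I_n.+1 => 2 * tX n k - tA n k)); last by move=> k _; rewrite termB.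
by rewrite sumrB -mulr_sumr.
Qed.

Lemma IB n : imx_app LS wB n = (-1) ^+ n.
Proof.
rewrite /imx_app.
rewrite (eq_bigr (fun k : 'I_n.+1 => fsb k n * wB k +
           (if n is n'.+1 then 2 * (fsb k n' * wB k) else 0))); last first.
  by move=> k _; rewrite LS_coef mulrDl; case: n k => [|n] k //; rewrite ?mul0r // mulrA.
rewrite big_split /= sumB SX_val SA_val.
case: n => [|n]; first by rewrite big1 // expr0; ring.
rewrite -mulr_sumr big_ord_recr /= fsb_lt // mul0r addr0 sumB SX_val SA_val.
rewrite !exprS; ring.
Qed.

Theorem corollary3p4 :
  ((exists M, is_inverse M FS) /\
   forall M, is_inverse M FS ->
     forall n, imx_app (imx_mul (imx_mul Dmx M) Dmx) e_vec n = catalan n) /\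
  ((exists M, is_inverse M LS) /\
   forall M, is_inverse M LS ->
     forall n, imx_app (imx_mul (imx_mul Dmx M) Dmx) e_vec n
               = (n.*2.+1)%:R * catalan n).
Proof.
split; split.
- exact: unitri_inverse FS_unitri.
- move=> M [_ [HM _]].
  exact: (@main_gen FS M wA catalan (proj1 FS_unitri) HM IA (fun k => erefl)).
- exact: unitri_inverse LS_unitri.
- move=> M [_ [HM _]].
  exact: (@main_gen LS M wB (fun n => (n.*2.+1)%:R * catalan n) (proj1 LS_unitri) HM IB (fun k => erefl)).
Qed.
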